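(* Let $\Gamma$ be a distance-regular graph with classical parameters $(D,b,\alpha,\beta)$ such that $b\ge2$, $b-1\ge\alpha\ge1$ and $D\ge3$, geometric with respect to a set $\mathcal C$ of Delsarte cliques. Let $r=[D]$. Assume that for every vertex $x$ the local graph at $x$ is the $\alpha$-clique extension of a $\frac{\beta}{\alpha}\times r$-grid, and assume $\beta>\alpha r$. Then: (a) for every assembly $M$ and every vertex $x$ at distance $i$ from $M$ ($i=0,1,\dots,D$), the number of vertices of $M$ at distance $i$ from $x$ equals $1+\alpha[i]$; (b) for every two vertices $x,y$ at distance $j$ ($j=1,\dots,D$), the number of assemblies containing $y$ at distance $j-1$ from $x$ equals $[j]$; (c) for every two vertices $x,y$ at distance $h$ ($h=0,1,\dots,D-1$), the subgraph induced on $B_h(x,y)=\Gamma_{h+1}(x)\cap\Gamma(y)$ is the $\alpha$-clique extension of a $(\frac{\beta}{\alpha}-[h])\times(r-[h])$-grid.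
   Context: Distance-regular graph with intersection numbers $b_i,c_i$, valency $k=b_0$; $\Gamma_i(x)$ is the set of vertices at distance $i$ from $x$, $\Gamma(y)=\Gamma_1(y)$. For integer $b\ne1$, $[j]=\frac{b^j-1}{b-1}$. Classical parameters $(D,b,\alpha,\beta)$: diameter $D$, $b_i=([D]-[i])(\beta-\alpha[i])$, $c_i=[i](1+\alpha[i-1])$. A Delsarte clique is a clique with $1+\frac{k}{-\theta_{\min}}$ vertices, $\theta_{\min}$ the smallest adjacency eigenvalue; geometric with respect to $\mathcal C$ means every edge lies in exactly one member of $\mathcal C$. An assembly is a maximal clique of $\Gamma$ not in $\mathcal C$. Distance from a vertex to a set $T$: $d(x,T)=\min_{y\in T}d(x,y)$. The $m\times n$-grid is $K_m\Box K_n$; the $s$-clique extension of $\Delta$ replaces each vertex by an $s$-clique, vertices in distinct cliques being adjacent iff the original vertices are adjacent. *)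

(* Defs.v *)
From HB Require Import structures.
From mathcomp Require Import all_boot all_order all_algebra all_field.
Set Implicit Arguments. Unset Strict Implicit. Unset Printing Implicit Defensive.
Import Order.TTheory GRing.Theory Num.Theory.

Section Graphs.
Variables (T : finType) (adj : rel T).

Definition simple_graph := symmetric adj /\ irreflexive adj.

Definition nbhd (y : T) : {set T} := [set z | adj y z].

Fixpoint ball (n : nat) (x : T) : {set T} :=
  if n is n'.+1 then ball n' x :|: \bigcup_(z in ball n' x) nbhd z
  else [set x].

Definition connected_graph := forall x y : T, y \in ball #|T| x.

(* graph distance (meaningful for connected graphs: least n with y in ball n x) *)
Definition dist (x y : T) : nat := find (fun n => y \in ball n x) (iota 0 #|T|.+1).

Definition sphere (i : nat) (x : T) : {set T} := [set z | dist x z == i].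

Definition setdist (x : T) (M : {set T}) : nat :=
  \big[minn/#|T|]_(y in M) dist x y.

Definition is_clique (C : {set T}) : bool :=
  [forall u in C, forall v in C, (u != v) ==> adj u v].

Definition is_maximal_clique (C : {set T}) : bool :=
  is_clique C && [forall C' : {set T}, (is_clique C' && (C \subset C')) ==> (C' == C)].

Definition adj_mx : 'M[algC]_#|T| :=
  \matrix_(i, j) ((adj (enum_val i) (enum_val j))%:R)%R.

Definition min_eigenvalue (theta : algC) :=
  eigenvalue adj_mx theta /\ forall mu, eigenvalue adj_mx mu -> (theta <= mu)%R.

Definition delsarte_clique (k : nat) (C : {set T}) :=
  is_clique C /\
  exists theta, min_eigenvalue theta /\ (#|C|%:R : algC)%R = (1 + k%:R / (- theta))%R.

Definition geometric (k : nat) (Cs : {set {set T}}) :=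
  (forall C, C \in Cs -> delsarte_clique k C) /\
  (forall u v, adj u v -> exists! C, C \in Cs /\ u \in C /\ v \in C).

Definition assembly (Cs : {set {set T}}) (M : {set T}) : bool :=
  is_maximal_clique M && (M \notin Cs).

End Graphs.

Definition qint (b j : nat) : nat := (b ^ j - 1) %/ (b - 1).

Definition has_diameter (T : finType) (adj : rel T) (D : nat) :=
  (forall x y : T, dist adj x y <= D) /\ exists x y : T, dist adj x y = D.

(* distance-regular with classical parameters (D, b, alpha, beta):
   b_i = ([D]-[i])(beta - alpha [i]),  c_i = [i](1 + alpha [i-1]) *)
Definition drg_classical (T : finType) (adj : rel T) (D b alpha beta : nat) :=
  [/\ simple_graph adj, connected_graph adj, has_diameter adj D,
      (forall (i : nat) (x y : T), i <= D -> dist adj x y = i ->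
         #|sphere adj i.+1 x :&: nbhd adj y| =
           (qint b D - qint b i) * (beta - alpha * qint b i))
    & (forall (i : nat) (x y : T), 1 <= i <= D -> dist adj x y = i ->
         #|sphere adj i.-1 x :&: nbhd adj y| =
           qint b i * (1 + alpha * qint b i.-1))].

(* adjacency in the s-clique extension of the m x n grid K_m [] K_n,
   vertex set 'I_m * 'I_n * 'I_s: distinct vertices are adjacent iff their
   grid vertices are equal (same clique) or adjacent in the grid *)
Definition clique_ext_grid_adj (m n s : nat) (u v : 'I_m * 'I_n * 'I_s) : bool :=
  (u != v) &&
  [|| (u.1 == v.1),
      ((u.1.1 == v.1.1) && (u.1.2 != v.1.2))
    | ((u.1.1 != v.1.1) && (u.1.2 == v.1.2))].

Definition induced_iso_clique_ext_grid (T : finType) (adj : rel T) (S : {set T})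
    (s m n : nat) :=
  exists f : 'I_m * 'I_n * 'I_s -> T,
    [/\ injective f, f @: setT = S &
        forall u v, adj (f u) (f v) = clique_ext_grid_adj u v].

(* Main.v *)
Require Import Defs.
From HB Require Import structures.
From mathcomp Require Import all_boot all_order all_algebra all_field.
From mathcomp Require Import zify ring.
Set Implicit Arguments. Unset Strict Implicit. Unset Printing Implicit Defensive.
Import Order.TTheory GRing.Theory Num.Theory.

Section Dist.
Variables (T : finType) (adj : rel T).
Hypothesis (Hsym : symmetric adj) (Hirr : irreflexive adj) (Hconn : connected_graph adj).

Lemma ball_adj n x z w : z \in ball adj n x -> adj z w -> w \in ball adj n.+1 x.
Proof.
move=> zb azw; rewrite /= inE; apply/orP; right; apply/bigcupP; exists z => //.
by rewrite inE.
Qed.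

Lemma dist_le n x y : y \in ball adj n x -> dist adj x y <= n.
Proof.
move=> yb; rewrite /dist.
case: (leqP n #|T|) => hn.
  rewrite leqNgt; apply/negP => hlt.
  have := before_find 0 hlt; rewrite nth_iota; last by lia.
  by rewrite add0n yb.
by apply: leq_trans (find_size _ _) _; rewrite size_iota.
Qed.

Lemma dist_ball x y : y \in ball adj (dist adj x y) x.
Proof.
have hh : has (fun n => y \in ball adj n x) (iota 0 #|T|.+1).
  apply/hasP; exists #|T|; first by rewrite mem_iota; lia.
  exact: Hconn.
have := nth_find 0 hh; rewrite nth_iota ?add0n //.
by rewrite -[X in _ < X](size_iota 0 #|T|.+1) -has_find.
Qed.

Lemma dist_leT x y : dist adj x y <= #|T|.
Proof. exact: dist_le (Hconn x y). Qed.

Lemma dist_adj x y z : adj y z -> dist adj x z <= (dist adj x y).+1.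
Proof. by move=> ayz; apply: dist_le; apply: ball_adj (dist_ball x y) ayz. Qed.

Lemma dist_adj2 x y z : adj y z ->
  [/\ dist adj x y <= (dist adj x z).+1 & dist adj x z <= (dist adj x y).+1].
Proof. by move=> ayz; split; apply: dist_adj => //; rewrite Hsym. Qed.

Lemma dist0 x y : dist adj x y = 0 -> y = x.
Proof. by move=> h; have := dist_ball x y; rewrite h /= inE => /eqP. Qed.

Lemma dist_xx x : dist adj x x = 0.
Proof. by apply/eqP; rewrite -leqn0; apply: dist_le; rewrite /= inE. Qed.

Lemma setdist_le x (M : {set T}) z : z \in M -> setdist adj x M <= dist adj x z.
Proof.
move=> zM; rewrite /setdist -minEnat.
exact: (bigmin_le_cond _ (fun y => dist adj x y) zM).
Qed.

Lemma setdistP x (M : {set T}) z0 : z0 \in M -> exists2 z, z \in M & setdist adj x M = dist adj x z.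
Proof.
move=> z0M; rewrite /setdist -minEnat.
rewrite (bigmin_eq_arg _ _ _ _ z0M); last by move=> i _; exact: dist_leT.
case: Order.TotalTheory.arg_minP => //= i iM _; by exists i.
Qed.

Lemma setdist_eq x (M : {set T}) n : (exists2 z, z \in M & dist adj x z = n) ->
  (forall z, z \in M -> n <= dist adj x z) -> setdist adj x M = n.
Proof.
case=> z zM dz hge; apply/eqP; rewrite eqn_leq.
have -> : setdist adj x M <= n by rewrite -dz; apply: setdist_le.
by have [w wM ->] := setdistP x zM; apply: hge.
Qed.

End Dist.
Lemma gadjE m n s (u v : 'I_m * 'I_n * 'I_s) :
  clique_ext_grid_adj u v = (u != v) && ((u.1.1 == v.1.1) || (u.1.2 == v.1.2)).
Proof.
case: u => [[a b] c]; case: v => [[a' b'] c']; rewrite /clique_ext_grid_adj /=.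
by rewrite !xpair_eqE; case: (a =P a'); case: (b =P b').
Qed.

Lemma cliqueP (T : finType) (adj : rel T) (C : {set T}) :
  reflect (forall u v, u \in C -> v \in C -> u != v -> adj u v) (is_clique adj C).
Proof.
apply: (iffP idP).
  move=> /forall_inP h u v uC vC nuv; have /forall_inP h2 := h u uC.
  by have := h2 v vC => /implyP; apply.
move=> h; apply/forall_inP => u uC; apply/forall_inP => v vC; apply/implyP.
exact: h.
Qed.

Definition locg (T : finType) (adj : rel T) (y : T) m n s
   (g : 'I_m * 'I_n * 'I_s -> T) :=
  [/\ injective g, g @: setT = nbhd adj y &
      forall u v, adj (g u) (g v) = clique_ext_grid_adj u v].

Definition swapu m n s (u : 'I_m * 'I_n * 'I_s) : 'I_n * 'I_m * 'I_s :=
  ((u.1.2, u.1.1), u.2).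

Lemma swapuK m n s : cancel (@swapu m n s) (@swapu n m s).
Proof. by case=> [[a b] c]. Qed.

Lemma gadj_swap m n s (u v : 'I_m * 'I_n * 'I_s) :
  clique_ext_grid_adj (swapu u) (swapu v) = clique_ext_grid_adj u v.
Proof.
rewrite !gadjE /= (inj_eq (can_inj (@swapuK m n s))).
by rewrite orbC.
Qed.

Section Local.
Variables (T : finType) (adj : rel T).
Hypothesis (Hsym : symmetric adj) (Hirr : irreflexive adj).
Variables (y : T) (m n s : nat) (g : 'I_m * 'I_n * 'I_s -> T).
Hypothesis Hg : locg adj y g.

Lemma locg_swap : locg adj y (fun u => g (swapu u)).
Proof.
case: Hg => ginj gim gadj; split.
- by move=> u v /ginj /(can_inj (@swapuK n m s)).
- rewrite -gim; apply/setP => z; apply/imsetP/imsetP => [[u _ ->]|[u _ ->]].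
    by exists (swapu u).
  by exists (swapu u) => //; rewrite swapuK.
- by move=> u v; rewrite gadj -gadj_swap !swapuK.
Qed.

Definition rowK i := y |: g @: [set u | u.1.1 == i].
Definition colK j := y |: g @: [set u | u.1.2 == j].

Lemma g_nb u : g u \in nbhd adj y.
Proof. by case: Hg => _ <- _; apply: imset_f. Qed.

Lemma adj_yg u : adj y (g u).
Proof. by have := g_nb u; rewrite inE. Qed.

Lemma g_neq_y u : (g u == y) = false.
Proof. by apply/negbTE/eqP => e; have := adj_yg u; rewrite e Hirr. Qed.

Lemma nb_g z : adj y z -> exists u, z = g u.
Proof.
move=> ayz; case: Hg => _ gim _.
have : z \in nbhd adj y by rewrite inE.
by rewrite -gim => /imsetP [u _ ->]; exists u.
Qed.

Lemma g_adj u v : adj (g u) (g v) = clique_ext_grid_adj u v.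
Proof. by case: Hg. Qed.

Lemma g_inj : injective g.
Proof. by case: Hg. Qed.

Lemma mem_img_g (P : pred _) u : (g u \in g @: [set v | P v]) = P u.
Proof. by rewrite (mem_imset _ _ g_inj) inE. Qed.

Lemma rowK_clique i : is_clique adj (rowK i).
Proof.
apply/cliqueP => a c.
move=> /setU1P [->|/imsetP [u hu ->]] /setU1P [->|/imsetP [v hv ->]].
- by rewrite eqxx.
- by move=> _; exact: adj_yg.
- by move=> _; rewrite Hsym adj_yg.
move: hu hv; rewrite !inE => /eqP hu /eqP hv huv.
rewrite g_adj gadjE hu hv eqxx andbT.
by apply: contra huv => /eqP ->.
Qed.

Lemma card_row i : #|[set u : 'I_m * 'I_n * 'I_s | u.1.1 == i]| = n * s.
Proof.
have -> : [set u : 'I_m * 'I_n * 'I_s | u.1.1 == i] =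
          (fun p : 'I_n * 'I_s => ((i, p.1), p.2)) @: [set: 'I_n * 'I_s].
  apply/setP => -[[a b] c]; rewrite !inE /=; apply/eqP/imsetP.
    by move=> ->; exists (b, c); rewrite ?inE.
  by case=> -[b' c'] _ [].
rewrite card_imset; first by rewrite cardsT card_prod !card_ord.
by move=> [b c] [b' c'] [-> ->].
Qed.

Lemma rowK_card i : #|rowK i| = (n * s).+1.
Proof.
rewrite cardsU1 (card_imset _ g_inj) card_row.
have -> : y \notin g @: [set u | u.1.1 == i].
  by apply/imsetP => -[u _ e]; have := g_neq_y u; rewrite -e eqxx.
by [].
Qed.

Lemma clique_rowcol (K : {set T}) u0 : is_clique adj K -> y \in K -> g u0 \in K ->
  K \subset rowK u0.1.1 \/ K \subset colK u0.1.2.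
Proof.
move=> /cliqueP Kc yK u0K.
have inK z : z \in K -> z != y -> exists u, z = g u.
  by move=> zK zy; apply: nb_g; apply: Kc => //; rewrite eq_sym.
case: (boolP (K \subset rowK u0.1.1)) => hr; [by left | right].
have [w wK wn] := subsetPn hr.
have wy : w != y by apply: contraNneq wn => ->; rewrite /rowK setU11.
have [v ev] := inK w wK wy; subst w.
have hv : v.1.1 != u0.1.1 by move: wn; rewrite /rowK !inE g_neq_y /= mem_img_g.
have vu0 : v != u0 by apply: contraNneq hv => ->.
have := Kc _ _ wK u0K; rewrite (inj_eq g_inj) vu0 g_adj gadjE vu0 (negbTE hv) /=.
move=> /(_ isT) hvc.
apply/subsetP => z zK; rewrite /colK !inE.
case: (eqVneq z y) => [//|zy].
have [u ez] := inK z zK zy; subst z; rewrite /= mem_img_g.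
apply/negPn/negP => huc.
have uu0 : u != u0 by apply: contraNneq huc => ->.
have := Kc _ _ zK u0K; rewrite (inj_eq g_inj) uu0 g_adj gadjE uu0 (negbTE huc) orbF /=.
move=> /(_ isT) hur.
have uv : u != v by apply: contraNneq huc => ->.
have := Kc _ _ zK wK; rewrite (inj_eq g_inj) uv g_adj gadjE uv /= => /(_ isT).
rewrite (eqP hur) (eqP hvc) eq_sym (negbTE hv) /=.
by rewrite (negbTE huc).
Qed.

Lemma classify_max (K : {set T}) : is_maximal_clique adj K -> y \in K -> 0 < m ->
  (exists i, K = rowK i) \/ (exists j, K = colK j).
Proof.
move=> /andP [Kc /forallP Kmax] yK hm.
have maxP C' : is_clique adj C' -> K \subset C' -> C' = K.
  by move=> c1 c2; have := Kmax C'; rewrite c1 c2 => /eqP.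
case: (boolP [exists u, g u \in K]) => [/existsP [u0 u0K]|hno].
  case: (clique_rowcol Kc yK u0K) => hsub.
    by left; exists u0.1.1; rewrite (maxP _ (rowK_clique _) hsub).
  right; exists u0.1.2; apply/esym/maxP => //.
  apply/cliqueP => a c.
  move=> /setU1P [->|/imsetP [u hu ->]] /setU1P [->|/imsetP [v hv ->]].
  - by rewrite eqxx.
  - by move=> _; exact: adj_yg.
  - by move=> _; rewrite Hsym adj_yg.
  move: hu hv; rewrite !inE => /eqP hu /eqP hv huv.
  rewrite g_adj gadjE hu hv eqxx orbT andbT.
  by apply: contra huv => /eqP ->.
left; exists (Ordinal hm); rewrite (maxP _ (rowK_clique _)) //.
apply/subsetP => z zK; rewrite /rowK !inE.
case: (eqVneq z y) => [//|zy].
have yz : y != z by rewrite eq_sym.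
have [u ez] := nb_g ((cliqueP _ _ Kc) _ _ yK zK yz).
by move: hno; rewrite negb_exists => /forallP /(_ u); rewrite -ez zK.
Qed.

Lemma rowK_max i : 1 < n -> 0 < s -> is_maximal_clique adj (rowK i).
Proof.
move=> hn hs; rewrite /is_maximal_clique rowK_clique /=.
apply/forallP => C'; apply/implyP => /andP [C'c sub].
have n0 : 0 < n by apply: ltnW.
pose u0 := ((i, Ordinal n0), Ordinal hs).
pose u1 := ((i, Ordinal hn), Ordinal hs).
have inR u : u.1.1 == i -> g u \in C'.
  by move=> hu; apply: (subsetP sub); rewrite /rowK !inE mem_img_g hu orbT.
have yC : y \in C' by apply: (subsetP sub); rewrite /rowK setU11.
case: (clique_rowcol C'c yC (inR u0 (eqxx _))) => hsub.
  by rewrite eqEsubset hsub sub.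
have := subsetP hsub _ (inR u1 (eqxx _)).
by rewrite /colK !inE g_neq_y /= mem_img_g.
Qed.

End Local.

Lemma colK_eq (T : finType) (y : T) m n s (g : 'I_m * 'I_n * 'I_s -> T) j :
  colK y g j = rowK y (fun u => g (swapu u)) j.
Proof.
rewrite /colK /rowK; congr (_ |: _); apply/setP => z.
apply/imsetP/imsetP => [[u hu ->]|[u hu ->]].
  by exists (swapu u); [move: hu; rewrite !inE | rewrite swapuK].
by exists (swapu u); move: hu; rewrite !inE.
Qed.

Lemma qintE b j : 1 < b -> qint b j = \sum_(i < j) b ^ i.
Proof.
move=> hb; have hb1 : 0 < b.-1 by case: b hb => [|[|b]].
by rewrite /qint !subn1 predn_exp mulKn.
Qed.

Lemma qintS b j : 1 < b -> qint b j.+1 = qint b j + b ^ j.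
Proof. by move=> hb; rewrite !qintE // big_ord_recr. Qed.

Lemma qint0 b : qint b 0 = 0.
Proof. by rewrite /qint expn0 subnn div0n. Qed.

Lemma qint_mono b j j' : 1 < b -> j <= j' -> qint b j <= qint b j'.
Proof.
move=> hb; elim: j' => [|j' IH]; first by rewrite leqn0 => /eqP ->.
rewrite leq_eqVlt => /orP [/eqP -> //|]; rewrite ltnS => /IH h.
by rewrite qintS //; apply: leq_trans h (leq_addr _ _).
Qed.

Lemma qint2 b : 1 < b -> qint b 2 = b.+1.
Proof. by move=> hb; rewrite !qintS // qint0 expn0 expn1 add1n. Qed.

Section Main.
Variables (T : finType) (adj : rel T) (D b alpha beta : nat) (Cs : {set {set T}}).
Hypothesis Hdrg : drg_classical adj D b alpha beta.
Hypotheses (Hb : 2 <= b) (Ha : 1 <= alpha <= b - 1) (HD : 3 <= D).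
Hypothesis Hgeo : geometric adj (qint b D * beta) Cs.
Hypothesis Hdiv : alpha %| beta.
Hypothesis Hloc : forall x : T, induced_iso_clique_ext_grid adj (nbhd adj x)
                   alpha (beta %/ alpha) (qint b D).
Hypothesis Hbig : alpha * qint b D < beta.

Local Notation m := (beta %/ alpha).
Local Notation r := (qint b D).
Local Notation dist := (dist adj).

Lemma Hsym : symmetric adj. Proof. by case: Hdrg => -[]. Qed.
Lemma Hirr : irreflexive adj. Proof. by case: Hdrg => -[]. Qed.
Lemma Hconn : connected_graph adj. Proof. by case: Hdrg. Qed.
Lemma HdistD x y : dist x y <= D. Proof. by case: Hdrg => _ _ [] h _ _ _; apply: h. Qed.
Lemma Hbi i x y : i <= D -> dist x y = i ->
   #|sphere adj i.+1 x :&: nbhd adj y| = (r - qint b i) * (beta - alpha * qint b i).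
Proof. by case: Hdrg => _ _ _ h _; apply: h. Qed.
Lemma Hci i x y : 1 <= i <= D -> dist x y = i ->
   #|sphere adj i.-1 x :&: nbhd adj y| = qint b i * (1 + alpha * qint b i.-1).
Proof. by case: Hdrg => _ _ _ _ h; apply: h. Qed.

Lemma alpha_gt0 : 0 < alpha. Proof. by case/andP: Ha. Qed.
Lemma beta_eq : beta = alpha * m. Proof. by rewrite mulnC divnK. Qed.
Lemma r_ge2 : 1 < r.
Proof.
have b1 : 1 < b by [].
have D2 : 2 <= D by apply: leq_trans HD.
apply: leq_trans (qint_mono b1 D2); rewrite (qint2 b1); lia.
Qed.
Lemma r_lt_m : r < m.
Proof. by rewrite -(ltn_pmul2l alpha_gt0) -beta_eq. Qed.
Lemma m_ge2 : 1 < m. Proof. exact: ltn_trans r_ge2 r_lt_m. Qed.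

Lemma locgP x : exists g : 'I_m * 'I_r * 'I_alpha -> T, locg adj x g.
Proof. by have [g hg] := Hloc x; exists g. Qed.

Lemma dist_nb x y z : adj y z ->
  dist x z = (dist x y).-1 \/ dist x z = dist x y \/ dist x z = (dist x y).+1.
Proof.
move=> ayz; have [h1 h2] := dist_adj2 Hsym Hconn x ayz; lia.
Qed.



Definition DR x y m1 n1 (g : 'I_m1 * 'I_n1 * 'I_alpha -> T) : {set 'I_m1} :=
  [set i | [exists u, (u.1.1 == i) && (dist x (g u) == (dist x y).-1)]].

Definition Pd h := forall (K : {set T}) (x : T), is_maximal_clique adj K -> setdist adj x K = h ->
  #|[set z in K | dist x z == h]| = 1 + alpha * qint b h.

Lemma maxclique_n0 (K : {set T}) (x : T) : is_maximal_clique adj K -> exists z, z \in K.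
Proof.
case/andP => _ /forallP /(_ [set x]).
case: (set_0Vmem K) => [->|[z zK] _]; last by exists z.
rewrite sub0set andbT => /implyP h.
have : is_clique adj [set x].
  by apply/cliqueP => u v; rewrite !inE => /eqP -> /eqP ->; rewrite eqxx.
move/h => /eqP e; have : x \in [set x] by rewrite inE.
by rewrite e inE.
Qed.

Lemma Pd0 : Pd 0.
Proof.
move=> K x Kmax hs.
have [z0 z0K] := maxclique_n0 x Kmax.
have [z zK dz] := setdistP Hconn x z0K; rewrite hs in dz.
have ez := dist0 Hconn (esym dz); subst z.
have -> : [set z in K | dist x z == 0] = [set x].
  apply/setP => w; rewrite !inE; apply/andP/eqP => [[_ /eqP /(dist0 Hconn) //]|->].
  by rewrite zK dist_xx.
by rewrite cards1 qint0 muln0.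
Qed.

Section Row.
Variables (x y : T) (h : nat) (m1 n1 : nat) (g : 'I_m1 * 'I_n1 * 'I_alpha -> T).
Hypotheses (Hg : locg adj y g) (Hh1 : 1 <= h) (HhD : h <= D) (Hxy : dist x y = h).

Lemma nb_dist u : h.-1 <= dist x (g u) <= h.+1.
Proof.
have H1 := adj_yg Hg u.
have H2 := dist_nb x H1.
rewrite Hxy in H2; lia.
Qed.

Lemma row_setdist i : i \in DR x y g -> setdist adj x (rowK y g i) = h.-1.
Proof.
rewrite inE => /existsP [u /andP [/eqP hu du]].
apply: (setdist_eq Hconn).
  by exists (g u); [rewrite /rowK !inE (mem_img_g Hg) ?hu ?eqxx ?orbT // | rewrite -Hxy; apply/eqP].
move=> z /setU1P [->|/imsetP [v _ ->]]; first by rewrite Hxy leq_pred.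
by case/andP: (nb_dist v).
Qed.

Lemma row_count : Pd h.-1 -> 1 < n1 -> #|DR x y g| = qint b h.
Proof.
move=> IH hn1.
pose Cu := [set u | dist x (g u) == h.-1].
have e1 : sphere adj h.-1 x :&: nbhd adj y = g @: Cu.
  apply/setP => z; rewrite !inE; apply/andP/imsetP => [[dz ayz]|[u hu ->]].
    by have [u ez] := nb_g Hg ayz; subst z; exists u; rewrite // inE.
  by move: hu; rewrite inE => hu; split => //; exact: adj_yg Hg u.
have hhD : 1 <= h <= D by rewrite Hh1 HhD.
have hC := Hci hhD Hxy; rewrite e1 (card_imset _ (g_inj Hg)) in hC.
have row_i j : #|[set u | (u \in Cu) && (u.1.1 == j)]| =
               if j \in DR x y g then 1 + alpha * qint b h.-1 else 0.
  case: ifP => hj.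
    rewrite -(IH (rowK y g j) x (rowK_max Hsym Hirr Hg j hn1 alpha_gt0) (row_setdist hj)).
    have -> : [set z in rowK y g j | dist x z == h.-1] =
              g @: [set u | (u \in Cu) && (u.1.1 == j)].
      apply/setP => z; rewrite /rowK !inE; apply/andP/imsetP.
        case=> /orP [/eqP ->|/imsetP [u hu ->]].
          by rewrite Hxy; case: (h) Hh1 => [|h'] //= _; rewrite eqn_leq ltnn.
        by move=> du; exists u => //; move: hu; rewrite !inE => ->; rewrite du.
      case=> u; rewrite !inE => /andP [du hu] ->; split=> //.
      by rewrite (mem_img_g Hg) hu orbT.
    by rewrite (card_imset _ (g_inj Hg)).
  apply/eqP; rewrite cards_eq0; apply/eqP/setP => u; rewrite !inE.
  apply/negP => /andP [du /eqP hu]; move: hj; rewrite inE.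
  suff -> : [exists u0, (u0.1.1 == j) && (dist x (g u0) == (dist x y).-1)] by [].
  by apply/existsP; exists u; rewrite hu eqxx Hxy.
have e2 : #|Cu| = #|DR x y g| * (1 + alpha * qint b h.-1).
  rewrite -sum1_card (partition_big (fun u => u.1.1) predT) //=.
  under eq_bigr => j _ do rewrite sum1dep_card row_i.
  by rewrite -big_mkcond sum_nat_const.
by rewrite e2 in hC; apply/eqP; move/eqP: hC; rewrite eqn_pmul2r.
Qed.

End Row.

Section Row2.
Variables (x y : T) (h : nat) (m1 n1 : nat) (g : 'I_m1 * 'I_n1 * 'I_alpha -> T).
Hypotheses (Hg : locg adj y g) (Hh1 : 1 <= h) (HhD : h <= D) (Hxy : dist x y = h).
Hypotheses (IH : Pd h.-1) (hn1 : 1 < n1) (hm1 : 1 < m1).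
Hypothesis hb : (r - qint b h) * (beta - alpha * qint b h) =
                alpha * ((m1 - qint b h) * (n1 - qint b h)).

Let gs := fun u => g (swapu u).

Lemma hR : #|DR x y g| = qint b h.
Proof. exact: row_count Hg Hh1 HhD Hxy IH hn1. Qed.

Lemma hC : #|DR x y gs| = qint b h.
Proof. exact: row_count (locg_swap Hg) Hh1 HhD Hxy IH hm1. Qed.

Lemma down_nb u w : (u.1.1 == w.1.1) || (u.1.2 == w.1.2) ->
  dist x (g w) = h.-1 -> dist x (g u) != h.+1.
Proof.
move=> hc dw; apply/negP => /eqP du.
have uw : u != w by apply/negP => /eqP e; subst w; move: dw; rewrite du; lia.
have a : adj (g w) (g u).
  by rewrite (g_adj Hg) gadjE (eq_sym w) uw (eq_sym w.1.1) (eq_sym w.1.2) hc.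
have := dist_adj Hconn x a; lia.
Qed.

Lemma Bu_eq : [set u | dist x (g u) == h.+1] =
   [set u | (u.1.1 \notin DR x y g) && (u.1.2 \notin DR x y gs)].
Proof.
apply/eqP; rewrite eqEcard; apply/andP; split.
  apply/subsetP => u; rewrite !inE => /eqP du; apply/andP; split; apply/negP.
    move=> /existsP [w /andP [/eqP hw dw]].
    have := @down_nb u w; rewrite hw eqxx du eqxx /= => /(_ isT).
    by rewrite -Hxy => /(_ (eqP dw)).
  move=> /existsP [w /andP [/eqP hw dw]].
  have := @down_nb u (swapu w); rewrite /= hw eqxx orbT du eqxx => /(_ isT).
  by rewrite -Hxy => /(_ (eqP dw)).
have e1 : sphere adj h.+1 x :&: nbhd adj y = g @: [set u | dist x (g u) == h.+1].
  apply/setP => z; rewrite !inE; apply/andP/imsetP => [[dz ayz]|[u hu ->]].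
    by have [u ez] := nb_g Hg ayz; subst z; exists u; rewrite // inE.
  by move: hu; rewrite inE => hu; split => //; exact: adj_yg Hg u.
have hB := Hbi HhD Hxy; rewrite e1 (card_imset _ (g_inj Hg)) hb in hB.
rewrite hB.
have -> : [set u | (u.1.1 \notin DR x y g) && (u.1.2 \notin DR x y gs)] =
          setX (setX (~: DR x y g) (~: DR x y gs)) [set: 'I_alpha].
  by apply/setP => -[[a c] d]; rewrite !inE andbT.
rewrite !cardsX cardsT card_ord.
have c1 := cardsC (DR x y g); have c2 := cardsC (DR x y gs).
rewrite hR card_ord in c1; rewrite hC card_ord in c2.
have -> : #|~: DR x y g| = m1 - qint b h by lia.
have -> : #|~: DR x y gs| = n1 - qint b h by lia.
by rewrite mulnC mulnA.
Qed.

Lemma row_case i : setdist adj x (rowK y g i) = h ->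
  #|[set z in rowK y g i | dist x z == h]| = 1 + alpha * qint b h.
Proof.
move=> hs.
have hi : i \notin DR x y g.
  by apply/negP => /(row_setdist Hg Hh1 HhD Hxy); rewrite hs; lia.
have -> : [set z in rowK y g i | dist x z == h] =
          y |: g @: [set u | (u.1.1 == i) && (u.1.2 \in DR x y gs)].
  apply/setP => z; rewrite /rowK !inE.
  case: (eqVneq z y) => [->|zy] /=; first by rewrite Hxy eqxx.
  apply/andP/imsetP.
    case=> /imsetP [u hu ->] du; exists u => //; move: hu; rewrite in_set => /eqP hu.
    rewrite in_set hu eqxx /=.
    case: (boolP (u.1.2 \in DR x y gs)) => // hc.
    have : u \in [set u | dist x (g u) == h.+1].
      by rewrite Bu_eq in_set hc andbT hu.
    by rewrite in_set (eqP du); lia.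
  case=> u; rewrite in_set => /andP [/eqP hu hc] ->; split.
    by rewrite (mem_img_g Hg) hu.
  have nB : dist x (g u) != h.+1.
    apply/negP => du.
    have : u \in [set u | dist x (g u) == h.+1] by rewrite in_set.
    by rewrite Bu_eq in_set hc andbF.
  have nC : dist x (g u) != h.-1.
    apply/negP => du; move/negP: hi; apply; rewrite in_set.
    by apply/existsP; exists u; rewrite hu eqxx Hxy du.
  by have := nb_dist Hg Hh1 HhD Hxy u; move: nB nC; lia.
rewrite cardsU1.
have -> : y \notin g @: [set u | (u.1.1 == i) && (u.1.2 \in DR x y gs)].
  by apply/imsetP => -[u _ e]; have := g_neq_y Hirr Hg u; rewrite -e eqxx.
rewrite (card_imset _ (g_inj Hg)).
have -> : [set u | (u.1.1 == i) && (u.1.2 \in DR x y gs)] =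
          setX (setX [set i] (DR x y gs)) [set: 'I_alpha].
  by apply/setP => -[[a c] d]; rewrite !inE andbT.
by rewrite !cardsX cards1 cardsT card_ord hC mul1n mulnC.
Qed.

End Row2.

Lemma hb_gen h : (r - qint b h) * (beta - alpha * qint b h) =
                 alpha * ((m - qint b h) * (r - qint b h)).
Proof. rewrite {1}beta_eq -mulnBr; ring. Qed.

Lemma hb_gen' h : (r - qint b h) * (beta - alpha * qint b h) =
                 alpha * ((r - qint b h) * (m - qint b h)).
Proof. by rewrite hb_gen [X in alpha * X]mulnC. Qed.

Lemma m_gt0 : 0 < m. Proof. exact: ltnW m_ge2. Qed.

Lemma Pd_step h : 1 <= h -> Pd h.-1 -> Pd h.
Proof.
move=> h1 IH K x Kmax hs.
have [z0 z0K] := maxclique_n0 x Kmax.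
have [y yK dy] := setdistP Hconn x z0K; rewrite hs in dy.
have hD : h <= D by rewrite dy HdistD.
have [g Hg] := locgP y.
case: (classify_max Hsym Hirr Hg Kmax yK m_gt0) => [[i eK]|[j eK]]; subst K.
  exact: (row_case Hg h1 hD (esym dy) IH r_ge2 m_ge2 (hb_gen h)).
move: hs; rewrite colK_eq => hs.
exact: (row_case (locg_swap Hg) h1 hD (esym dy) IH m_ge2 r_ge2 (hb_gen' h)).
Qed.

Lemma Pd_all h : Pd h.
Proof. elim: h => [|h IH]; [exact: Pd0 | exact: Pd_step]. Qed.

Lemma subgrid_iso (y : T) m1 n1 p q (g : 'I_m1 * 'I_n1 * 'I_alpha -> T)
  (A : {set 'I_m1}) (B : {set 'I_n1}) :
  locg adj y g -> #|A| = p -> #|B| = q ->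
  induced_iso_clique_ext_grid adj (g @: [set u | (u.1.1 \in A) && (u.1.2 \in B)]) alpha p q.
Proof.
move=> Hg hA hB.
pose eA (i : 'I_p) : 'I_m1 := enum_val (cast_ord (esym hA) i).
pose eB (i : 'I_q) : 'I_n1 := enum_val (cast_ord (esym hB) i).
have eAi : injective eA by move=> i i' /enum_val_inj /cast_ord_inj.
have eBi : injective eB by move=> i i' /enum_val_inj /cast_ord_inj.
pose e (u : 'I_p * 'I_q * 'I_alpha) := ((eA u.1.1, eB u.1.2), u.2).
have ei : injective e.
  by move=> [[a c] d] [[a' c'] d'] [/eAi -> /eBi -> ->].
exists (fun u => g (e u)); split.
- by move=> u v /(g_inj Hg) /ei.
- apply/setP => z; apply/imsetP/imsetP => [[u _ ->]|[v hv ->]].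
    exists (e u) => //; rewrite in_set /=.
    by rewrite /eA /eB !enum_valP.
  move: hv; rewrite in_set => /andP [hv1 hv2].
  exists ((cast_ord hA (enum_rank_in hv1 v.1.1), cast_ord hB (enum_rank_in hv2 v.1.2)), v.2).
    by rewrite inE.
  congr g; rewrite /e /eA /eB /= !cast_ordK !enum_rankK_in //.
  by case: v hv1 hv2 => [[]].
- move=> u v; rewrite (g_adj Hg) !gadjE (inj_eq ei) /= (inj_eq eAi) (inj_eq eBi).
  by [].
Qed.

Lemma part_c h x y : h <= D.-1 -> dist x y = h ->
  induced_iso_clique_ext_grid adj (sphere adj h.+1 x :&: nbhd adj y)
    alpha (m - qint b h) (r - qint b h).
Proof.
move=> hD dxy.
case: h hD dxy => [|h] hD dxy.
  have e := dist0 Hconn dxy; subst y.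
  rewrite qint0 !subn0.
  have -> : sphere adj 1 x :&: nbhd adj x = nbhd adj x.
    apply/setP => z; rewrite !inE; case: (boolP (adj x z)) => axz; last by rewrite andbF.
    rewrite andbT; have := dist_adj Hconn x axz; rewrite dist_xx.
    case: (dist x z) (dist0 Hconn (y := z) (x := x)) => [|[|k]] //.
    by move=> /(_ erefl) ezx; move: axz; rewrite ezx Hirr.
  exact: Hloc.
set h1 := h.+1 in hD dxy *.
have Hh1 : 1 <= h1 by [].
have HhD : h1 <= D by move: hD HD; lia.
have [g Hg] := locgP y.
have IH : Pd h1.-1 := @Pd_all h1.-1.
have Be := Bu_eq Hg Hh1 HhD dxy IH r_ge2 m_ge2 (hb_gen h1).
have e1 : sphere adj h1.+1 x :&: nbhd adj y = g @: [set u | dist x (g u) == h1.+1].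
  apply/setP => z; rewrite !inE; apply/andP/imsetP => [[dz ayz]|[u hu ->]].
    by have [u ez] := nb_g Hg ayz; subst z; exists u; rewrite // inE.
  by move: hu; rewrite inE => hu; split => //; exact: adj_yg Hg u.
rewrite e1 Be.
have cA : #|~: DR x y g| = m - qint b h1.
  have := cardsC (DR x y g); rewrite (hR Hg Hh1 HhD dxy IH r_ge2) card_ord; lia.
have cB : #|~: DR x y (fun u => g (swapu u))| = r - qint b h1.
  have := cardsC (DR x y (fun u => g (swapu u))).
  rewrite (hC Hg Hh1 HhD dxy IH m_ge2) card_ord; lia.
have eS : [set u : 'I_m * 'I_r * 'I_alpha | (u.1.1 \in ~: DR x y g) && (u.1.2 \in ~: DR x y (fun u => g (swapu u)))]
   = [set u : 'I_m * 'I_r * 'I_alpha | (u.1.1 \notin DR x y g) && (u.1.2 \notin DR x y (fun u => g (swapu u)))].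
  by apply/setP => u; rewrite !inE.
by rewrite -eS; apply: subgrid_iso Hg cA cB.
Qed.

Definition Lset : {set {set T}} := [set L | is_clique adj L && (#|L| == beta.+1)].

Section Lines.
Variables (y : T) (g : 'I_m * 'I_r * 'I_alpha -> T).
Hypothesis Hg : locg adj y g.

Lemma colK_card j : #|colK y g j| = beta.+1.
Proof. by rewrite colK_eq (rowK_card Hirr (locg_swap Hg)) mulnC -beta_eq. Qed.

Lemma colK_clique j : is_clique adj (colK y g j).
Proof. by rewrite colK_eq; apply: (rowK_clique Hsym (locg_swap Hg)). Qed.

Lemma rowK_card_lt i : #|rowK y g i| < beta.+1.
Proof. by rewrite (rowK_card Hirr Hg) ltnS mulnC. Qed.

Lemma in_colK u j : (g u \in colK y g j) = (u.1.2 == j).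
Proof. by rewrite /colK !inE (g_neq_y Hirr Hg) /= (mem_img_g Hg). Qed.

Lemma in_rowK u i : (g u \in rowK y g i) = (u.1.1 == i).
Proof. by rewrite /rowK !inE (g_neq_y Hirr Hg) /= (mem_img_g Hg). Qed.

Lemma y_colK j : y \in colK y g j. Proof. by rewrite /colK setU11. Qed.
Lemma y_rowK i : y \in rowK y g i. Proof. by rewrite /rowK setU11. Qed.

Lemma colK_inj : injective (colK y g).
Proof.
move=> j j' e.
have := in_colK ((Ordinal m_gt0, j), Ordinal alpha_gt0) j'.
by rewrite -e in_colK eqxx => /esym /eqP.
Qed.

Lemma rowK_inj : injective (rowK y g).
Proof.
have r0 : 0 < r by apply: ltnW r_ge2.
move=> i i' e.
have := in_rowK ((i, Ordinal r0), Ordinal alpha_gt0) i'.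
by rewrite -e in_rowK eqxx => /esym /eqP.
Qed.

Lemma big_clique_col (L : {set T}) : is_clique adj L -> y \in L -> beta.+1 <= #|L| ->
  exists j, L = colK y g j.
Proof.
move=> Lc yL cL.
have : 0 < #|L :\ y| by rewrite (cardsD1 y L) yL in cL; lia.
rewrite card_gt0 => /set0Pn [w]; rewrite !inE => /andP [wy wL].
have yw : y != w by rewrite eq_sym.
have [u0 eu] := nb_g Hg ((cliqueP _ _ Lc) _ _ yL wL yw).
subst w.
case: (clique_rowcol Hirr Hg Lc yL wL) => hs.
  by have := subset_leq_card hs; have := rowK_card_lt u0.1.1; lia.
by exists u0.1.2; apply/eqP; rewrite eqEcard hs colK_card.
Qed.

Lemma line_char (L : {set T}) : y \in L -> (L \in Lset) = [exists j, L == colK y g j].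
Proof.
move=> yL; apply/idP/existsP.
  rewrite inE => /andP [Lc /eqP cL].
  have [j ->] := big_clique_col Lc yL (eq_leq (esym cL)).
  by exists j.
by case=> j /eqP ->; rewrite inE colK_clique colK_card eqxx.
Qed.

Lemma lines_y : #|[set L in Lset | y \in L]| = r.
Proof.
have -> : [set L in Lset | y \in L] = colK y g @: setT.
  apply/setP => L; rewrite inE; apply/andP/imsetP.
    case=> LL yL; move: LL; rewrite (line_char yL) => /existsP [j /eqP ->].
    by exists j.
  case=> j _ ->; split; last exact: y_colK.
  by rewrite (line_char (y_colK j)); apply/existsP; exists j.
by rewrite (card_imset _ colK_inj) cardsT card_ord.
Qed.

Lemma lines_yz z : y != z -> #|[set L in Lset | (y \in L) && (z \in L)]| = adj y z.
Proof.
move=> yz; case: (boolP (adj y z)) => ayz.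
  have [u eu] := nb_g Hg ayz; subst z.
  have -> : [set L in Lset | (y \in L) && (g u \in L)] = [set colK y g u.1.2].
    apply/setP => L; rewrite in_set in_set1; apply/idP/eqP.
      case/and3P => LL yL zL; move: LL; rewrite (line_char yL) => /existsP [j /eqP eL].
      by move: zL; rewrite eL in_colK => /eqP ->.
    move=> ->; rewrite y_colK in_colK eqxx !andbT.
    by rewrite (line_char (y_colK _)); apply/existsP; exists u.1.2.
  by rewrite cards1.
apply/eqP; rewrite cards_eq0; apply/eqP/setP => L.
rewrite in_set in_set0; apply/negP => /and3P [LL yL zL]; move: LL; rewrite inE => /andP [Lc _].
by move: ayz; rewrite ((cliqueP _ _ Lc) _ _ yL zL yz).
Qed.

End Lines.

Section Spec.
Local Open Scope ring_scope.

Lemma cnt_eq (i j : 'I_#|T|) :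
  (#|[set L in Lset | (enum_val i \in L) && (enum_val j \in L)]|%:R : algC) =
  (i == j)%:R * r%:R + adj_mx adj i j.
Proof.
rewrite mxE; have [g Hg] := locgP (enum_val i).
case: (eqVneq i j) => [<-|ij].
  rewrite mul1r; have [_ _ e] := Hg.
  have -> : [set L in Lset | (enum_val i \in L) && (enum_val i \in L)] =
            [set L in Lset | enum_val i \in L] by apply/setP => L; rewrite !in_set andbb.
  by rewrite (lines_y Hg) Hirr addr0.
rewrite mul0r add0r (lines_yz Hg) //.
by apply: contra ij => /eqP /enum_val_inj ->.
Qed.

Lemma eig_bound (th : algC) : eigenvalue (adj_mx adj) th -> 0 <= th + r%:R.
Proof.
case/eigenvalueP => v hv vn0.
pose w (i : 'I_#|T|) := v 0 i.
pose c (L : {set T}) (i : 'I_#|T|) : algC := (enum_val i \in L)%:R.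
pose sL L := \sum_i c L i * w i.
pose N := \sum_i w i * (w i)^*.
have key : \sum_(L in Lset) sL L * (sL L)^* = (th + r%:R) * N.
  have e1 : \sum_(L in Lset) sL L * (sL L)^* =
            \sum_(L in Lset) \sum_i \sum_j (c L i * c L j) * (w i * (w j)^*).
    apply: eq_bigr => L _; rewrite /sL rmorph_sum big_distrlr /=.
    apply: eq_bigr => i _; apply: eq_bigr => j _.
    by rewrite rmorphM /c rmorph_nat; ring.
  rewrite e1 exchange_big /=.
  under eq_bigr => i _ do rewrite exchange_big /=.
  have e2 i j : \sum_(L in Lset) (c L i * c L j) * (w i * (w j)^*) =
               ((i == j)%:R * r%:R + adj_mx adj i j) * (w i * (w j)^*).
    rewrite -mulr_suml -cnt_eq; congr (_ * _).
    have -> : \sum_(L in Lset) c L i * c L j =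
       (\sum_(L in Lset) (if (enum_val i \in L) && (enum_val j \in L) then 1 else 0)%N)%:R.
      rewrite natr_sum; apply: eq_bigr => L _; rewrite /c.
      by case: (enum_val i \in L); case: (enum_val j \in L); rewrite ?mul0r ?mul1r.
    by rewrite -big_mkcondr sum1dep_card.
  under eq_bigr => i _ do under eq_bigr => j _ do rewrite e2 mulrDl.
  under eq_bigr => i _ do rewrite big_split /=.
  rewrite big_split /= addrC mulrDl; congr (_ + _).
    rewrite /N mulr_sumr exchange_big /=; apply: eq_bigr => j _.
    have : (v *m adj_mx adj) 0 j = th * w j by rewrite hv mxE.
    rewrite mxE => H; rewrite mulrA -H mulr_suml; apply: eq_bigr => i _.
    by rewrite /w; ring.
  rewrite /N mulr_sumr; apply: eq_bigr => i _.
  rewrite (bigD1 i) //= eqxx mul1r big1 ?addr0 //.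
  by move=> j /negbTE ji; rewrite eq_sym ji mul0r mul0r.
have h1 : 0 <= \sum_(L in Lset) sL L * (sL L)^*.
  by apply: sumr_ge0 => L _; exact: mul_conjC_ge0.
have [j vj] : exists j, w j != 0.
  apply/existsP; apply: contraR vn0 => /existsPn h.
  by apply/eqP/rowP => j; rewrite mxE; have := h j; rewrite negbK => /eqP.
have hN : 0 < N.
  have pj : 0 < w j * (w j)^* by rewrite lt_def mul_conjC_eq0 vj mul_conjC_ge0.
  rewrite /N (bigD1 j) //=; apply: (lt_le_trans pj); rewrite lerDl.
  by apply: sumr_ge0 => i _; exact: mul_conjC_ge0.
by rewrite key pmulr_lge0 in h1.
Qed.

End Spec.

Lemma Cs_big (C : {set T}) : C \in Cs -> 2 <= #|C| -> beta.+1 <= #|C|.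
Proof.
move=> hC c2.
have [_ [th [[eig _] ec]]] := (Hgeo.1 C hC).
have hb0 := eig_bound eig.
rewrite -(ler_nat algC) ec.
rewrite -(ler_nat algC) ec in c2.
set t := (- th)%R in ec c2 *.
have tr : (t <= r%:R)%R by rewrite /t lerNl -subr_ge0 opprK.
have treal : t \is Num.real.
  have -> : t = (r%:R - (r%:R - t))%R by ring.
  by apply: realB; [exact: realn | apply: ger0_real; rewrite subr_ge0].
have e2 : (2 = 1 + 1 :> algC)%R by rewrite -(natrD algC 1 1).
have k1 : (1 <= (r * beta)%:R / t)%R by move: c2; rewrite e2 lerD2l.
have t0 : (0 < t)%R.
  rewrite real_ltNge ?real0 //; apply/negP => tle.
  have : ((r * beta)%:R / t <= 0)%R by apply: mulr_ge0_le0 => //; rewrite invr_le0.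
  by move=> h; have := le_trans k1 h; rewrite ler10.
rewrite -addn1 natrD addrC lerD2l ler_pdivlMr // natrM [X in (_ <= X)%R]mulrC.
by apply: ler_wpM2l.
Qed.

Lemma col_in_Cs y (g : 'I_m * 'I_r * 'I_alpha -> T) j : locg adj y g -> colK y g j \in Cs.
Proof.
move=> Hg.
pose u := ((Ordinal m_gt0, j), Ordinal alpha_gt0).
have ayz := adj_yg Hg u.
have [C [[CC [yC zC]] _]] := Hgeo.2 y (g u) ayz.
have c2 : 2 <= #|C|.
  have : [set y; g u] \subset C by apply/subsetP => z; rewrite !inE => /orP [] /eqP ->.
  move/subset_leq_card; rewrite cards2.
  by have -> : y != g u by rewrite eq_sym (g_neq_y Hirr Hg).
have Cc : is_clique adj C by have [] := Hgeo.1 C CC.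
have [j' eC] := big_clique_col Hg Cc yC (Cs_big CC c2).
move: zC; rewrite eC (in_colK Hg) /= => /eqP ej; subst j'.
by rewrite -eC.
Qed.

Lemma row_notin_Cs y (g : 'I_m * 'I_r * 'I_alpha -> T) i : locg adj y g -> rowK y g i \notin Cs.
Proof.
move=> Hg; apply/negP => hC.
have := Cs_big hC; rewrite (rowK_card Hirr Hg).
have := rowK_card_lt Hg i; rewrite (rowK_card Hirr Hg).
have := r_ge2; have := alpha_gt0; nia.
Qed.

Lemma assembly_iff y (g : 'I_m * 'I_r * 'I_alpha -> T) (M : {set T}) : locg adj y g -> y \in M ->
  assembly adj Cs M = [exists i, M == rowK y g i].
Proof.
move=> Hg yM; apply/idP/existsP.
  case/andP => Mmax Mn.
  case: (classify_max Hsym Hirr Hg Mmax yM m_gt0) => [[i ->]|[j eM]]; first by exists i.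
  by move: Mn; rewrite eM (col_in_Cs j Hg).
case=> i /eqP ->; rewrite /assembly (row_notin_Cs i Hg) andbT.
exact: (rowK_max Hsym Hirr Hg i r_ge2 alpha_gt0).
Qed.

Lemma part_b j x y : 1 <= j <= D -> dist x y = j ->
  #|[set M : {set T} | [&& assembly adj Cs M, y \in M & setdist adj x M == j.-1]]| = qint b j.
Proof.
case/andP => h1 hD dxy.
have [g Hg] := locgP y.
have IH : Pd j.-1 := @Pd_all j.-1.
have hRj := hR Hg h1 hD dxy IH r_ge2.
rewrite -hRj -(card_imset _ (rowK_inj Hg)).
have -> // : [set M : {set T} | [&& assembly adj Cs M, y \in M & setdist adj x M == j.-1]] =
   rowK y g @: DR x y g.
apply/setP => M; rewrite in_set; apply/and3P/imsetP.
  case=> asm yM /eqP sd.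
  move: asm; rewrite (assembly_iff Hg yM) => /existsP [i /eqP eM]; subst M.
  exists i => //.
  have [z zK dz] := setdistP Hconn x (@y_rowK y g i); rewrite sd in dz.
  move: zK; rewrite /rowK !inE => /orP [/eqP ez|].
    by subst z; move: dz; rewrite dxy => e; exfalso; lia.
  move=> /imsetP [u hu ez]; subst z; apply/existsP; exists u.
  by move: hu; rewrite in_set => ->; rewrite dxy dz eqxx.
case=> i hi ->; split.
- by rewrite (assembly_iff Hg (@y_rowK y g i)); apply/existsP; exists i.
- exact: y_rowK.
- by rewrite (row_setdist Hg h1 hD dxy hi).
Qed.

Lemma main_all :
  [/\ (forall (M : {set T}) (x : T), assembly adj Cs M ->
         #|[set y in M | dist x y == setdist adj x M]| =
           1 + alpha * qint b (setdist adj x M)),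
      (forall (j : nat) (x y : T), 1 <= j <= D -> dist x y = j ->
         #|[set M : {set T} | [&& assembly adj Cs M, y \in M &
                                  setdist adj x M == j.-1]]| = qint b j)
    & (forall (h : nat) (x y : T), h <= D.-1 -> dist x y = h ->
         induced_iso_clique_ext_grid adj (sphere adj h.+1 x :&: nbhd adj y)
           alpha (beta %/ alpha - qint b h) (qint b D - qint b h))].
Proof.
split.
- by move=> M x /andP [Mmax _]; apply: (@Pd_all (setdist adj x M)).
- exact: part_b.
- exact: part_c.
Qed.

End Main.

Theorem theorem26 (T : finType) (adj : rel T) (D b alpha beta : nat)
    (Cs : {set {set T}}) :
  drg_classical adj D b alpha beta ->
  2 <= b -> 1 <= alpha <= b - 1 -> 3 <= D ->
  geometric adj (qint b D * beta) Cs ->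
  alpha %| beta ->
  (forall x : T, induced_iso_clique_ext_grid adj (nbhd adj x)
                   alpha (beta %/ alpha) (qint b D)) ->
  alpha * qint b D < beta ->
  [/\ (* (a) *)
      (forall (M : {set T}) (x : T), assembly adj Cs M ->
         #|[set y in M | dist adj x y == setdist adj x M]| =
           1 + alpha * qint b (setdist adj x M)),
      (* (b) *)
      (forall (j : nat) (x y : T), 1 <= j <= D -> dist adj x y = j ->
         #|[set M : {set T} | [&& assembly adj Cs M, y \in M &
                                  setdist adj x M == j.-1]]| = qint b j)
    & (* (c) *)
      (forall (h : nat) (x y : T), h <= D.-1 -> dist adj x y = h ->
         induced_iso_clique_ext_grid adj (sphere adj h.+1 x :&: nbhd adj y)
           alpha (beta %/ alpha - qint b h) (qint b D - qint b h))].
Proof.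
move=> H1 H2 H3 H4 H5 H6 H7 H8.
by apply: main_all.
Qed.
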